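(* Let $G$ be a finite non-abelian group such that $G/Z(G)\cong \mathbb{Z}_p\times\mathbb{Z}_p$ for a prime $p$. Put $z=|Z(G)|$ and $n=\frac{(p-1)z}{p}$. Then $\mathrm{Spec}(\Gamma_G)=\{[0]^{(p+1)(n-1)},[-n]^{p},[np]^1\}$, $\mathrm{L\text{-}Spec}(\Gamma_G)=\{[0]^1,[np]^{(p+1)(n-1)},[(p+1)n]^{p}\}$, $\mathrm{Q\text{-}Spec}(\Gamma_G)=\{[np]^{(p+1)(n-1)},[n(p-1)]^{p},[2np]^1\}$, and $E(\Gamma_G)=LE(\Gamma_G)=SE(\Gamma_G)=2np$.
   Context: For a finite non-abelian group $G$ with center $Z(G)$ and $x\in G$, $x^G$ is the conjugacy class of $x$. The non-commuting conjugacy class graph (NCCC-graph) $\Gamma_G$ is the simple undirected graph with vertex set $\{x^G: x\in G\setminus Z(G)\}$, in which distinct vertices $x^G,y^G$ are adjacent iff $x'y'\neq y'x'$ for all $x'\in x^G$, $y'\in y^G$. For a simple graph $\mathcal G$ with adjacency matrix $A$ and diagonal degree matrix $D$, let $L=D-A$ and $Q=D+A$; $\mathrm{Spec}$, $\mathrm{L\text{-}Spec}$, $\mathrm{Q\text{-}Spec}$ denote the multisets of eigenvalues of $A$, $L$, $Q$, written $\{[\lambda_1]^{k_1},\dots\}$ where $[\lambda]^k$ means eigenvalue $\lambda$ of multiplicity $k$ (a term with multiplicity $0$ is absent). $E(\mathcal G)=\sum_{\lambda\in\mathrm{Spec}}|\lambda|$; with $\Delta(\mathcal G)=2|E(\mathcal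 G)|/|V(\mathcal G)|$ (twice the number of edges over the number of vertices), $LE(\mathcal G)=\sum_{\beta\in \mathrm{L\text{-}Spec}}|\beta-\Delta(\mathcal G)|$ and $SE(\mathcal G)=\sum_{\gamma\in\mathrm{Q\text{-}Spec}}|\gamma-\Delta(\mathcal G)|$ (sums with multiplicity). *)

(* Defs.v *)
From mathcomp Require Import all_boot all_order all_algebra all_fingroup all_solvable all_field.
Set Implicit Arguments. Unset Strict Implicit. Unset Printing Implicit Defensive.
Import GRing.Theory Num.Theory.

Section NCCC.
Variables (gT : finGroupType) (G : {group gT}).

Definition nccc_vertices : {set {set gT}} :=
  [set C in classes G | ~~ (C \subset 'Z(G))%g].

Definition nccc_adj (C D : {set gT}) : bool :=
  (C != D) && [forall x in C, forall y in D, (x * y)%g != (y * x)%g].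

Definition nccc_n := #|nccc_vertices|.

Definition nccc_vertex (i : 'I_nccc_n) : {set gT} := enum_val i.

End NCCC.

Local Open Scope ring_scope.

Definition nccc_A (gT : finGroupType) (G : {group gT}) : 'M[algC]_(nccc_n G) :=
  \matrix_(i, j) (nccc_adj (nccc_vertex i) (nccc_vertex j))%:R.

Definition nccc_D (gT : finGroupType) (G : {group gT}) : 'M[algC]_(nccc_n G) :=
  diag_mx (\row_i \sum_j nccc_A G i j).

Definition nccc_L (gT : finGroupType) (G : {group gT}) := nccc_D G - nccc_A G.
Definition nccc_Q (gT : finGroupType) (G : {group gT}) := nccc_D G + nccc_A G.

(* Delta = 2|E|/|V| = (sum of degrees) / |V|. *)
Definition nccc_Delta (gT : finGroupType) (G : {group gT}) : algC :=
  (\sum_i \sum_j nccc_A G i j) / (nccc_n G)%:R.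

(* The multiset of eigenvalues (roots of the characteristic polynomial,
   with multiplicity) of a square complex matrix. *)
Definition eigenvalues n (M : 'M[algC]_n) : seq algC :=
  sval (closed_field_poly_normal (char_poly M)).

Definition energy n (M : 'M[algC]_n) : algC := \sum_(l <- eigenvalues M) `|l|.
Definition shifted_energy n (M : 'M[algC]_n) (d : algC) : algC :=
  \sum_(l <- eigenvalues M) `|l - d|.

Definition nccc_E (gT : finGroupType) (G : {group gT}) := energy (nccc_A G).
Definition nccc_LE (gT : finGroupType) (G : {group gT}) :=
  shifted_energy (nccc_L G) (nccc_Delta G).
Definition nccc_SE (gT : finGroupType) (G : {group gT}) :=
  shifted_energy (nccc_Q G) (nccc_Delta G).

(* The multiset {[l1]^k1, ..., } as a sequence. *)
Definition mspec (s : seq (algC * nat)) : seq algC :=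
  flatten [seq nseq x.2 x.1 | x <- s].

(* Main.v *)
Require Import Defs.
From mathcomp Require Import all_boot all_order all_algebra all_fingroup all_solvable all_field.
From mathcomp Require Import spectral.
From mathcomp Require Import zify ring.
Import GRing.Theory Num.Theory.
Set Implicit Arguments. Unset Strict Implicit. Unset Printing Implicit Defensive.
Local Open Scope ring_scope.

Lemma count_enumT (T : finType) (a : pred T) : count a (enum T) = #|a|.
Proof.
rewrite cardE /enum_mem size_filter /enum_mem count_filter.
by apply: eq_count => x; rewrite /= andbT.
Qed.

Lemma sum_boolN (T : finType) (a : pred T) :
  (\sum_i (a i : nat))%N = #|[pred i | a i]|.
Proof.
rewrite -sum1_card [RHS]big_mkcond /=.
by apply: eq_bigr => i _; rewrite unfold_in; case: (a i).
Qed.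

Lemma sum_boolR (T : finType) (a : pred T) :
  \sum_i ((a i)%:R : algC) = #|[pred i | a i]|%:R.
Proof. by rewrite -natr_sum sum_boolN. Qed.

Lemma char_poly_conj n (P B : 'M[algC]_n) : P \in unitmx ->
  char_poly (invmx P *m B *m P) = char_poly B.
Proof.
move=> Pu.
pose Pc := map_mx (@polyC algC) P.
pose Pi := map_mx (@polyC algC) (invmx P).
have PiPc : Pi *m Pc = 1%:M by rewrite -map_mxM mulVmx // map_mx1.
have E : char_poly_mx (invmx P *m B *m P) = Pi *m char_poly_mx B *m Pc.
  rewrite /char_poly_mx !map_mxM mulmxBr mulmxBl -/Pi -/Pc.
  by rewrite [Pi *m _%:M]scalar_mxC -[_%:M *m Pi *m Pc]mulmxA PiPc mulmx1.
rewrite /char_poly E !det_mulmx mulrC mulrA -det_mulmx.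
by rewrite -map_mxM mulmxV // map_mx1 det1 mul1r.
Qed.

Section Spec.
Variables (T : eqType) (N n p : nat) (k : 'I_N -> T).
Hypothesis hfib : forall i, #|[pred j | k j == k i]| = n.
Hypothesis hN : N = ((p + 1) * n)%N.
Hypothesis hn : (0 < n)%N.
Hypothesis hp : (0 < p)%N.

Definition Am : 'M[algC]_N := \matrix_(i, j) (k i != k j)%:R.
Definition Sm : 'M[algC]_N := \matrix_(i, j) (k i == k j)%:R.

Lemma fibC i : #|[pred j | k i != k j]| = (n * p)%N.
Proof.
have := cardC [pred j | k j == k i]; rewrite hfib card_ord.
have -> : #|[predC [pred j | k j == k i]]| = #|[pred j | k i != k j]|.
  by apply: eq_card => j; rewrite !inE eq_sym.
lia.
Qed.

Lemma Am_row i : \sum_j Am i j = (n * p)%:R.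
Proof.
rewrite -(fibC i) -sum_boolR; apply: eq_bigr => j _; by rewrite mxE.
Qed.

Lemma AmSm : Am *m Sm = n%:R *: Am.
Proof.
apply/matrixP => i j; rewrite !mxE.
under eq_bigr do rewrite !mxE -natrM mulnb.
rewrite sum_boolR.
case: (eqVneq (k i) (k j)) => [e|ne] /=.
  rewrite mulr0 (eq_card (B := pred0)) ?card0 // => l.
  by rewrite !inE e eq_sym; case: (k l == k j).
rewrite mulr1 -(hfib j); congr (_ %:R); apply: eq_card => l.
rewrite !inE; case: (k l =P k j) => [->|]; by rewrite ?andbF ?ne.
Qed.

Lemma AmAm : Am *m Am = (n * p)%:R *: Sm + (n * (p - 1))%:R *: Am.
Proof.
apply/matrixP => i j; rewrite !mxE.
under eq_bigr do rewrite !mxE -natrM mulnb.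
rewrite sum_boolR.
case: (eqVneq (k i) (k j)) => [e|ne] /=.
  rewrite mulr1 mulr0 addr0 -(fibC i); congr (_ %:R); apply: eq_card => l.
  by rewrite !inE e eq_sym andbb.
rewrite mulr0 mulr1 add0r; congr (_ %:R).
have := cardUI [pred l | k l == k i] [pred l | k l == k j].
rewrite !hfib [#|[predI _ & _]|](eq_card (B := pred0)); last first.
  by move=> l; rewrite !inE; case: (k l =P k i) => [->|] //=; rewrite (negbTE ne).
rewrite card0 addn0.
have := cardC [predU [pred l | k l == k i] & [pred l | k l == k j]].
rewrite card_ord.
have -> : #|[predC [predU [pred l | k l == k i] & [pred l | k l == k j]]]|
   = #|[pred l | (k i != k l) && (k l != k j)]|.
  by apply: eq_card => l; rewrite !inE negb_or (eq_sym (k l)).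
move: (#|_|) (#|_|) => a b.
move=> h1 h2; rewrite hN h2 in h1.
have {h1} -> : a = ((p + 1) * n - (n + n))%N by lia.
rewrite mulnBr muln1 mulnDl mul1n mulnC; lia.
Qed.

Lemma Am_cubic : Am *m (Am *m Am) =
  (n * (n * p))%:R *: Am + (n * (p - 1))%:R *: (Am *m Am).
Proof.
rewrite {1}AmAm mulmxDr -!scalemxAr AmSm scalerA -natrM mulnC.
by [].
Qed.

Lemma tr_Am : \tr Am = 0.
Proof. by rewrite /mxtrace; apply: big1 => i _; rewrite mxE eqxx. Qed.

Lemma tr_AmAm : \tr (Am *m Am) = (N * (n * p))%:R.
Proof.
rewrite AmAm /mxtrace.
under eq_bigr do rewrite !mxE !eqxx /= mulr1 mulr0 addr0.
by rewrite -natr_sum sum_nat_const card_ord.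
Qed.

Lemma Am_normal : Am \is normalmx.
Proof.
apply: symmetric_normalmx.
  apply/is_hermitianmxP; rewrite expr0 scale1r.
  by apply/matrixP => i j; rewrite !mxE eq_sym.
by apply/mxOverP => i j; rewrite mxE realn.
Qed.

Definition Pm := spectralmx Am.
Definition dv i : algC := spectral_diag Am 0 i.

Lemma Pm_unit : Pm \in unitmx.
Proof. exact: spectral_unit. Qed.

Lemma Am_eq : Am = invmx Pm *m diag_mx (spectral_diag Am) *m Pm.
Proof. exact/orthomx_spectralP/Am_normal. Qed.

Lemma Dm_eq : diag_mx (spectral_diag Am) = Pm *m Am *m invmx Pm.
Proof.
by rewrite {2}Am_eq !mulmxA mulmxV ?Pm_unit // mul1mx mulmxK ?Pm_unit.
Qed.


Let Dm := diag_mx (spectral_diag Am).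
Let Pi := invmx Pm.

Lemma conjM (X Y : 'M[algC]_N) :
  (Pm *m X *m Pi) *m (Pm *m Y *m Pi) = Pm *m (X *m Y) *m Pi.
Proof.
by rewrite !mulmxA -[Pm *m X *m Pi *m Pm]mulmxA mulVmx ?Pm_unit // mulmx1.
Qed.

Lemma Dm_entry (r : 'rV[algC]_N) i : diag_mx r i i = r 0 i.
Proof. by rewrite mxE eqxx mulr1n. Qed.

Lemma cA_eq c e : c%:M + e *: Am =
  invmx Pm *m diag_mx (\row_i (c + e * dv i)) *m Pm.
Proof.
have -> : diag_mx (\row_i (c + e * dv i)) = c%:M + e *: Dm.
  apply/matrixP => i j; rewrite !mxE.
  by case: (i == j); rewrite ?mulr1n ?mulr0n ?mulr0 ?addr0.
rewrite mulmxDr mulmxDl -scalemxAr -scalemxAl -Am_eq.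
by rewrite scalar_mxC mulmxKV ?Pm_unit.
Qed.

Lemma char_cA c e :
  char_poly (c%:M + e *: Am) = \prod_i ('X - (c + e * dv i)%:P).
Proof.
rewrite cA_eq char_poly_conj ?Pm_unit // char_poly_trig ?diag_mx_is_trig //.
by apply: eq_bigr => i _; rewrite Dm_entry mxE.
Qed.

Lemma eig_prod (M : 'M[algC]_N) :
  char_poly M = \prod_(x <- eigenvalues M) ('X - x%:P).
Proof.
rewrite /eigenvalues; case: closed_field_poly_normal => s /= hs.
by rewrite {1}hs (monicP (char_poly_monic M)) scale1r.
Qed.

Lemma eig_cA c e : perm_eq (eigenvalues (c%:M + e *: Am))
  [seq c + e * dv i | i <- enum 'I_N].
Proof.
apply: prod_XsubC_eq; rewrite -eig_prod char_cA big_map big_enum /=.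
by apply: eq_bigl => i; rewrite inE.
Qed.

Lemma Dm_cubic i : dv i * (dv i * dv i) =
  (n * (n * p))%:R * dv i + (n * (p - 1))%:R * (dv i * dv i).
Proof.
have h := congr1 (fun M => Pm *m M *m Pi) Am_cubic; move: h => /=.
rewrite -!conjM mulmxDr mulmxDl -!scalemxAr -!scalemxAl -!conjM.
rewrite /Pi -Dm_eq -/Dm !mulmx_diag => /matrixP /(_ i i).
by rewrite !mxE !eqxx !mulr1n.
Qed.

Lemma dv_cases i : [|| dv i == 0, dv i == - n%:R | dv i == (n * p)%:R].
Proof.
have h := Dm_cubic i.
have e : dv i * (dv i + n%:R) * (dv i - (n * p)%:R) = 0.
  move: h; rewrite !natrM (natrB _ hp) => h.
  have -> : dv i * (dv i + n%:R) * (dv i - n%:R * p%:R) =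
    dv i * (dv i * dv i) - (n%:R * (n%:R * p%:R) * dv i +
      n%:R * (p%:R - 1%:R) * (dv i * dv i)) by ring.
  by rewrite h subrr.
move/eqP: e; rewrite !mulf_eq0 subr_eq0 addr_eq0 => /orP[/orP[->|->]|->];
  by rewrite ?orbT.
Qed.

Lemma trD : \tr Dm = 0.
Proof.
by rewrite /Dm Dm_eq mxtrace_mulC mulmxA mulVmx ?Pm_unit // mul1mx tr_Am.
Qed.

Lemma trD2 : \tr (Dm *m Dm) = (N * (n * p))%:R.
Proof.
rewrite /Dm Dm_eq -/Pi conjM mxtrace_mulC mulmxA /Pi mulVmx ?Pm_unit //.
by rewrite mul1mx tr_AmAm.
Qed.

Lemma sum_dv : \sum_i dv i = 0.
Proof. by rewrite -[RHS]trD /mxtrace; apply: eq_bigr => i _; rewrite Dm_entry. Qed.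

Lemma sum_dv2 : \sum_i dv i * dv i = (N * (n * p))%:R.
Proof.
rewrite -trD2 /mxtrace /Dm mulmx_diag.
by apply: eq_bigr => i _; rewrite Dm_entry mxE.
Qed.

Local Notation mn := (- (n%:R : algC)).
Local Notation np := ((n * p)%:R : algC).

Lemma ne0mn : (0 : algC) != mn.
Proof. by rewrite eq_sym oppr_eq0 pnatr_eq0 -lt0n. Qed.
Lemma ne0np : (0 : algC) != np.
Proof. by rewrite eq_sym pnatr_eq0 muln_eq0 negb_or -!lt0n hn hp. Qed.
Lemma nemnnp : mn != np.
Proof.
rewrite -subr_eq0 -opprD oppr_eq0 -natrD pnatr_eq0 addn_eq0.
by rewrite negb_and -lt0n hn.
Qed.

Definition cnt (x : algC) := #|[pred i | dv i == x]|.

Lemma b3 (f : algC -> algC) (x : algC) :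
  [|| x == 0, x == mn | x == np] ->
  f x = f 0 *+ (x == 0) + f mn *+ (x == mn) + f np *+ (x == np).
Proof.
have h1 := ne0mn; have h2 := ne0np; have h3 := nemnnp.
case/or3P => /eqP ->; rewrite ?eqxx.
- by rewrite (negbTE h1) (negbTE h2) !mulr0n !addr0 mulr1n.
- by rewrite eq_sym (negbTE h1) (negbTE h3) mulr0n add0r addr0 mulr1n.
- by rewrite eq_sym (negbTE h2) eq_sym (negbTE h3) !mulr0n !add0r mulr1n.
Qed.

Lemma sum_f (f : algC -> algC) :
  \sum_i f (dv i) = f 0 *+ cnt 0 + f mn *+ cnt mn + f np *+ cnt np.
Proof.
rewrite /cnt -!sum_boolN -!sumrMnr -!big_split /=.
apply: eq_bigr => i _; apply: b3; exact: dv_cases.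
Qed.

Lemma cnt_vals : [/\ cnt np = 1%N, cnt mn = p & cnt 0 = ((p + 1) * (n - 1))%N].
Proof.
have S0 := sum_f (fun _ => 1).
rewrite sumr_const card_ord in S0.
have S1 := sum_f id; rewrite sum_dv /= in S1.
have S2 := sum_f (fun x => x * x); rewrite sum_dv2 /= in S2.
move: S0 S1 S2.
move: (cnt np) (cnt mn) (cnt 0) => c2 c1 c0.
rewrite mulrNN !mul0r !mul0rn !add0r mulNrn -!natrM -!mulrnA.
move=> H0 H1 H2.
have E0 : N = (c0 + c1 + c2)%N.
  by apply/eqP; rewrite -(eqr_nat algC) !natrD; apply/eqP; exact: H0.
have E1 : (n * c1 = n * p * c2)%N.
  apply/eqP; rewrite -(eqr_nat algC) -subr_eq0; apply/eqP.
  rewrite -oppr0 H1 !natrM; ring.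
have E2 : (N * (n * p) = n * n * c1 + n * p * (n * p) * c2)%N.
  by apply/eqP; rewrite -(eqr_nat algC) !natrD; apply/eqP; exact: H2.
have Hc1 : c1 = (p * c2)%N.
  by apply/eqP; rewrite -(eqn_pmul2l hn) mulnA E1.
have Hc2 : c2 = 1%N.
  have K0 : (0 < n * n * p * (p + 1))%N by rewrite !muln_gt0 hn hp addn1.
  apply/eqP; rewrite -(eqn_pmul2l K0) muln1; apply/eqP.
  rewrite Hc1 hN in E2.
  have -> : (n * n * p * (p + 1) * c2 = n * n * (p * c2) + n * p * (n * p) * c2)%N.
    by ring.
  rewrite -E2; ring.
split => //; first by rewrite Hc1 Hc2 muln1.
move: E0; rewrite Hc1 Hc2 muln1 hN => E0.
have -> : c0 = ((p + 1) * n - (p + 1))%N by lia.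
by rewrite mulnBr muln1.
Qed.

Lemma cnt_out x : ~~ [|| x == 0, x == mn | x == np] -> cnt x = 0%N.
Proof.
move=> hx; rewrite /cnt (eq_card (B := pred0)) ?card0 // => i.
rewrite !inE; apply/negbTE; apply: contra hx => /eqP <-; exact: dv_cases.
Qed.

Lemma dv_perm : perm_eq [seq dv i | i <- enum 'I_N]
  (mspec [:: (0, ((p + 1) * (n - 1))%N); (mn, p); (np, 1%N)]).
Proof.
have [C2 C1 C0] := cnt_vals.
apply/allP => x _; apply/eqP; rewrite count_map count_enumT.
rewrite /mspec /= !count_cat !count_nseq /= addn0.
have -> : #|[pred i | preim dv (pred1 x) i]| = cnt x.
  by apply: eq_card => i; rewrite !inE.
have h1 := ne0mn; have h2 := ne0np; have h3 := nemnnp.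
case: (eqVneq x 0) => [->|h0].
  by rewrite C0 eq_sym (negbTE h1) eq_sym (negbTE h2) /= ?mul1n ?addn0.
case: (eqVneq x mn) => [->|hm].
  by rewrite C1 eq_sym (negbTE h3) !mul0n mul1n !addn0 add0n.
case: (eqVneq x np) => [->|hq].
  by rewrite C2 !mul0n !add0n.
rewrite cnt_out; last by rewrite (negbTE h0) (negbTE hm) (negbTE hq).
by rewrite !mul0n.
Qed.

Lemma eig_general c e : perm_eq (eigenvalues (c%:M + e *: Am))
  (mspec [:: (c + e * 0, ((p + 1) * (n - 1))%N); (c + e * mn, p);
             (c + e * np, 1%N)]).
Proof.
apply: perm_trans (eig_cA c e) _.
have -> : [seq c + e * dv i | i <- enum 'I_N] =
   map (fun x => c + e * x) [seq dv i | i <- enum 'I_N].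
  by rewrite -[RHS]map_comp.
have -> : mspec [:: (c + e * 0, ((p + 1) * (n - 1))%N); (c + e * mn, p);
             (c + e * np, 1%N)] = map (fun x => c + e * x)
    (mspec [:: (0, ((p + 1) * (n - 1))%N); (mn, p); (np, 1%N)]).
  by rewrite /mspec /= !map_cat !map_nseq.
exact: perm_map dv_perm.
Qed.

End Spec.

Lemma eig_spec (T : eqType) (N n p : nat) (k : 'I_N -> T)
  (hfib : forall i, #|[pred j | k j == k i]| = n)
  (hN : N = ((p + 1) * n)%N) (hn : (0 < n)%N) (hp : (0 < p)%N)
  (c e x0 x1 x2 : algC) :
  x0 = c + e * 0 -> x1 = c + e * - n%:R -> x2 = c + e * (n * p)%:R ->
  perm_eq (eigenvalues (c%:M + e *: Am k))
    (mspec [:: (x0, ((p + 1) * (n - 1))%N); (x1, p); (x2, 1%N)]).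
Proof. by move=> -> -> ->; exact: eig_general. Qed.

Lemma sum_mspec (F : algC -> algC) a i b j c k :
  \sum_(l <- mspec [:: (a, i); (b, j); (c, k)]) F l =
  F a *+ i + F b *+ j + F c *+ k.
Proof.
by rewrite /mspec /= !big_cat /= big_nil !big_nseq !iter_addr !addr0 addrA.
Qed.

Lemma mspec_rot (a b c : algC * nat) :
  perm_eq (mspec [:: a; b; c]) (mspec [:: c; a; b]).
Proof. by rewrite /mspec /= !cats0 catA perm_catC. Qed.

Section Grp.
Variables (gT : finGroupType) (G : {group gT}) (p : nat).
Hypotheses (pr : prime p) (nab : ~~ abelian G)
  (iso : (G / 'Z(G))%g \isog [set: 'Z_p * 'Z_p]).

Local Notation Z := 'Z(G)%G.
Local Open Scope group_scope.

Lemma p_gt1 : (1 < p)%N. Proof. exact: prime_gt1. Qed.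

Lemma ZnG : G \subset 'N(Z). Proof. exact: normal_norm (center_normal G). Qed.

Lemma cardQ : #|G / Z| = (p * p)%N.
Proof. by rewrite (card_isog iso) cardsT card_prod card_ord Zp_cast // p_gt1. Qed.

Lemma abT : abelian [set: 'Z_p * 'Z_p].
Proof.
apply/centsP => a _ b _; case: a b => [a1 a2] [b1 b2].
by rewrite /commute; congr pair; apply: (centsP (Zp_abelian _)); rewrite ?inE.
Qed.

Lemma abQ : abelian (G / Z).
Proof. by rewrite (isog_abelian iso) abT. Qed.

Lemma cardG : #|G| = (p * p * #|Z|)%N.
Proof.
by rewrite -(Lagrange (center_sub G)) -card_quotient ?ZnG // cardQ mulnC.
Qed.

Lemma conj_eq x g : x \in G -> g \in G -> exists2 c, c \in Z & x ^ g = x * c.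
Proof.
move=> xG gG; exists [~ x, g]; last exact: conjg_mulR.
apply: (subsetP (der1_min ZnG abQ)); exact: mem_commg.
Qed.

Lemma Zcent x : x \in G -> Z \subset 'C_G[x].
Proof.
move=> xG; apply/subsetP => c /centerP [cG cc]; rewrite inE cG /=.
by apply/cent1P; apply: cc.
Qed.

Lemma notZ x : x \in G -> x \notin Z -> ~~ (G \subset 'C_G[x]).
Proof.
move=> xG xZ; apply: contra xZ => /subsetP h; apply/centerP; split => // y yG.
by have /setIP [_ /cent1P] := h y yG.
Qed.

Lemma cent_card x : x \in G -> x \notin Z -> #|'C_G[x]| = (p * #|Z|)%N.
Proof.
move=> xG xZ.
have ZC := Zcent xG; have CG : 'C_G[x] \subset G := subsetIl _ _.
have L1 : (#|G : 'C_G[x]| * #|'C_G[x] : Z| = p ^ 2)%N.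
  by rewrite (Lagrange_index CG ZC) -card_quotient ?ZnG // cardQ.
have i1 : #|'C_G[x] : Z| != 1%N.
  rewrite indexg_eq1; apply: contra xZ => /subsetP; apply.
  by rewrite inE xG cent1id.
have i2 : #|G : 'C_G[x]| != 1%N by rewrite indexg_eq1 notZ.
have : (#|'C_G[x] : Z| %| p ^ 2)%N by rewrite -L1 dvdn_mull.
case/(dvdn_pfactor _ _ pr) => m; case: m => [|[|[|m]]] //= _ e.
- by rewrite e in i1.
- by rewrite -(Lagrange ZC) e expn1 mulnC.
- by move: L1; rewrite e -{2}(mul1n (p ^ 2)%N) => /eqP; rewrite eqn_pmul2r ?expn_gt0 ?prime_gt0 // (negbTE i2).
Qed.

Lemma cent_index x : x \in G -> x \notin Z -> #|'C_G[x] : Z| = p.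
Proof.
move=> xG xZ; have := Lagrange (Zcent xG); rewrite cent_card //.
by rewrite mulnC => /eqP; rewrite eqn_pmul2r ?cardG_gt0 // => /eqP.
Qed.

Lemma cent_ab x : x \in G -> x \notin Z -> abelian 'C_G[x].
Proof.
move=> xG xZ; apply: (@cyclic_factor_abelian _ Z).
  rewrite subsetI Zcent //= centsC.
  apply: subset_trans (subsetIl _ _) _; rewrite centsC; exact: subsetIr.
apply: prime_cyclic; rewrite card_quotient ?cent_index //.
exact: subset_trans (subsetIl _ _) ZnG.
Qed.

Lemma comm_cent x y : x \in G -> x \notin Z -> y \in G -> y \notin Z ->
  commute x y -> 'C_G[x] = 'C_G[y].
Proof.
move=> xG xZ yG yZ cxy.
have yC : y \in 'C_G[x] by rewrite inE yG; apply/cent1P; apply/esym.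
apply/eqP; rewrite eqEcard !cent_card // leqnn andbT.
apply/subsetP => u uC; rewrite inE (subsetP (subsetIl _ _) _ uC).
apply/cent1P; exact: (centsP (cent_ab xG xZ)).
Qed.

Lemma comm_centE x y : x \in G -> x \notin Z -> y \in G -> y \notin Z ->
  commute x y <-> 'C_G[x] = 'C_G[y].
Proof.
move=> xG xZ yG yZ; split; first exact: comm_cent.
move=> e; have : y \in 'C_G[x] by rewrite e inE yG cent1id.
by case/setIP => _ /cent1P.
Qed.

Lemma conj_same x g : x \in G -> x \notin Z -> g \in G ->
  [/\ x ^ g \in G, x ^ g \notin Z & 'C_G[x ^ g] = 'C_G[x]].
Proof.
move=> xG xZ gG.
have xgG : x ^ g \in G by rewrite groupJ.
have xgZ : x ^ g \notin Z by rewrite memJ_norm // (subsetP ZnG).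
split => //; symmetry; apply: comm_cent => //.
have [c cZ ->] := conj_eq xG gG.
apply: commuteM; first exact: commute_refl.
by move/centerP: cZ => [_ cc]; apply/esym/cc.
Qed.

Definition key (C : {set gT}) := 'C_G[repr C].

Lemma vert_rep C : C \in nccc_vertices G ->
  exists x, [/\ x \in G, x \notin Z & C = x ^: G].
Proof.
rewrite inE => /andP [/imsetP [x xG ->] nsub]; exists x; split => //.
apply: contra nsub => xZ; apply/subsetP => y /imsetP [g gG ->].
by rewrite memJ_norm // (subsetP ZnG).
Qed.

Lemma class_elt x u : x \in G -> x \notin Z -> u \in x ^: G ->
  [/\ u \in G, u \notin Z & 'C_G[u] = 'C_G[x]].
Proof. by move=> xG xZ /imsetP [g gG ->]; exact: conj_same. Qed.

Lemma key_vert x : x \in G -> x \notin Z -> key (x ^: G) = 'C_G[x].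
Proof.
move=> xG xZ; rewrite /key.
have hr : repr (x ^: G) \in x ^: G by apply: (mem_repr x); exact: class_refl.
by have [_ _ ->] := class_elt xG xZ hr.
Qed.

Lemma vert_class x : x \in G -> x \notin Z -> x ^: G \in nccc_vertices G.
Proof.
move=> xG xZ; rewrite inE mem_classes //=; apply: contra xZ => /subsetP; apply.
exact: class_refl.
Qed.

Lemma adj_key C D : C \in nccc_vertices G -> D \in nccc_vertices G ->
  nccc_adj C D = (key C != key D).
Proof.
move=> /vert_rep [x [xG xZ ->]] /vert_rep [y [yG yZ ->]].
rewrite /nccc_adj !key_vert //.
case: (eqVneq 'C_G[x] 'C_G[y]) => [e|ne] /=.
  apply/negbTE/negP => /andP [_ /forall_inP h].
  have /forall_inP h2 := h x (class_refl G x).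
  have := h2 y (class_refl G y).
  by have -> := (comm_centE xG xZ yG yZ).2 e; rewrite eqxx.
apply/andP; split.
  apply: contra ne => /eqP e; by rewrite -(key_vert xG xZ) -(key_vert yG yZ) e.
apply/forall_inP => u uC; apply/forall_inP => v vD; apply/eqP => cuv.
have [uG uZ eu] := class_elt xG xZ uC.
have [vG vZ ev] := class_elt yG yZ vD.
by move: ne; rewrite -eu -ev (comm_cent uG uZ vG vZ cuv) eqxx.
Qed.

Lemma class_card x : x \in G -> x \notin Z -> #|x ^: G| = p.
Proof.
move=> xG xZ; rewrite -index_cent1.
have := Lagrange (subsetIl G 'C[x]); rewrite cent_card // cardG.
rewrite [in RHS]mulnAC => /eqP.
by rewrite eqn_pmul2l ?muln_gt0 ?cardG_gt0 ?prime_gt0 // => /eqP.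
Qed.

Lemma cover_card (V : {set {set gT}}) : V \subset nccc_vertices G ->
  #|cover V| = (#|V| * p)%N.
Proof.
move=> sV.
have tri : trivIset V.
  apply: (@trivIsetS _ _ (classes G)).
    apply: subset_trans sV _; apply/subsetP => C; rewrite inE => /andP [].
    by [].
  by case/and3P: (classes_partition G).
move: tri; rewrite /trivIset => /eqP <-.
rewrite -sum_nat_const; apply: eq_bigr => C /(subsetP sV) /vert_rep [x [xG xZ ->]].
exact: class_card.
Qed.

Lemma fiber_card x : x \in G -> x \notin Z ->
  (#|[set D in nccc_vertices G | key D == 'C_G[x]]| * p = (p - 1) * #|Z|)%N.
Proof.
move=> xG xZ.
rewrite -cover_card; last by apply/subsetP => D; rewrite inE => /andP [].
have -> : cover [set D in nccc_vertices G | key D == 'C_G[x]] = 'C_G[x] :\: Z.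
  apply/setP => u; apply/bigcupP/setDP.
    case=> D; rewrite inE => /andP [/vert_rep [y [yG yZ ->]] /eqP ky] uD.
    have [uG uZ eu] := class_elt yG yZ uD.
    by split => //; rewrite -ky key_vert // -eu inE uG cent1id.
  case=> uH uZ; have uG : u \in G := subsetP (subsetIl _ _) _ uH.
  exists (u ^: G); last exact: class_refl.
  rewrite inE vert_class //= key_vert //; apply/eqP; symmetry.
  apply: comm_cent => //; apply/esym/cent1P; by case/setIP: uH.
rewrite cardsD (setIidPr (Zcent xG)) cent_card //.
by rewrite mulnBl mul1n.
Qed.

Lemma total_card : (#|nccc_vertices G| * p = (p * p - 1) * #|Z|)%N.
Proof.
rewrite -cover_card //.
have -> : cover (nccc_vertices G) = G :\: Z.
  apply/setP => u; apply/bigcupP/setDP.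
    case=> D /vert_rep [y [yG yZ ->]] uD.
    by have [uG uZ _] := class_elt yG yZ uD.
  case=> uG uZ; exists (u ^: G); [exact: vert_class | exact: class_refl].
rewrite cardsD (setIidPr (center_sub G)) cardG.
by rewrite mulnBl mul1n.
Qed.

Lemma exists_nc : exists x, x \in G /\ x \notin Z.
Proof.
have : ~~ (G \subset Z).
  apply: contra nab => sGZ; rewrite abelianE; apply: subset_trans sGZ _.
  exact: subsetIr.
by case/subsetPn => x xG xZ; exists x.
Qed.

Definition kk (i : 'I_(nccc_n G)) := key (nccc_vertex i).
Local Notation nn := ((p - 1) * #|Z| %/ p)%N.

Lemma fib_enum H : #|[pred j : 'I_(nccc_n G) | key (nccc_vertex j) == H]| =
  #|[set D in nccc_vertices G | key D == H]|.
Proof.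
rewrite -(card_imset _ enum_val_inj); apply: eq_card => D.
rewrite inE; apply/imsetP/andP.
  case=> j; rewrite inE => e ->; split; last exact: e.
  exact: (enum_valP j).
case=> Dv /eqP e; exists (enum_rank_in Dv D : 'I_(nccc_n G)); last by rewrite /nccc_vertex enum_rankK_in.
by rewrite inE /nccc_vertex enum_rankK_in // e.
Qed.

Lemma fiber_nn x : x \in G -> x \notin Z ->
  #|[set D in nccc_vertices G | key D == 'C_G[x]]| = nn.
Proof.
by move=> xG xZ; rewrite -(fiber_card xG xZ) mulnK // prime_gt0.
Qed.

Lemma hfibG i : #|[pred j | kk j == kk i]| = nn.
Proof.
have := enum_valP i => /vert_rep [x [xG xZ e]].
by rewrite /kk {2}/nccc_vertex e key_vert // fib_enum fiber_nn.
Qed.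

Lemma nn_p : (nn * p = (p - 1) * #|Z|)%N.
Proof.
have [x [xG xZ]] := exists_nc.
by rewrite -(fiber_nn xG xZ) fiber_card.
Qed.

Lemma hNG : nccc_n G = ((p + 1) * nn)%N.
Proof.
apply/eqP; rewrite -(eqn_pmul2r (prime_gt0 pr)) -mulnA nn_p /nccc_n total_card.
have h := p_gt1.
apply/eqP; rewrite mulnA; congr (_ * _)%N.
rewrite mulnBr muln1 mulnDl mul1n; lia.
Qed.

Lemma hnG : (0 < nn)%N.
Proof.
have := nn_p; have h := p_gt1; have hz : (0 < #|Z|)%N := cardG_gt0 _.
case: nn => //; rewrite mul0n => /esym /eqP; rewrite muln_eq0; lia.
Qed.

Lemma A_eq : nccc_A G = Am kk.
Proof.
apply/matrixP => i j; rewrite !mxE adj_key //; exact: enum_valP.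
Qed.
End Grp.

Theorem theorem2p3 (gT : finGroupType) (G : {group gT}) (p : nat) :
  prime p ->
  ~~ abelian G ->
  (G / 'Z(G))%g \isog [set: 'Z_p * 'Z_p] ->
  let z := #|'Z(G)%g|%N in
  let n := ((p - 1) * z %/ p)%N in
  [/\ perm_eq (eigenvalues (nccc_A G))
        (mspec [:: (0, ((p + 1) * (n - 1))%N); (- n%:R, p); ((n * p)%:R, 1%N)]),
      perm_eq (eigenvalues (nccc_L G))
        (mspec [:: (0, 1%N); ((n * p)%:R, ((p + 1) * (n - 1))%N);
                   (((p + 1) * n)%:R, p)]),
      perm_eq (eigenvalues (nccc_Q G))
        (mspec [:: ((n * p)%:R, ((p + 1) * (n - 1))%N); ((n * (p - 1))%:R, p);
                   ((2 * n * p)%:R, 1%N)]) &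
      [/\ nccc_E G = (2 * n * p)%:R, nccc_LE G = (2 * n * p)%:R &
          nccc_SE G = (2 * n * p)%:R]].
Proof.
move=> pr nab iso z n.
have hfib : forall i, #|[pred j | kk (G:=G) j == kk i]| = n := hfibG pr iso.
have hN : nccc_n G = ((p + 1) * n)%N := hNG pr nab iso.
have hn : (0 < n)%N := hnG pr nab iso.
have hp := prime_gt0 pr.
have AE := A_eq pr iso.
have DE : nccc_D G = ((n * p)%:R : algC)%:M.
  apply/matrixP => i j; rewrite /nccc_D AE !mxE (Am_row hfib hN hn hp).
  by [].
have LE_ : nccc_L G = (n * p)%:R%:M + (-1) *: Am (kk (G:=G)).
  by rewrite /nccc_L DE AE scaleN1r.
have QE_ : nccc_Q G = (n * p)%:R%:M + 1 *: Am (kk (G:=G)).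
  by rewrite /nccc_Q DE AE scale1r.
have AE' : nccc_A G = 0%:M + 1 *: Am (kk (G:=G)).
  rewrite AE scale1r; apply/matrixP => i j; by rewrite !mxE mul0rn add0r.
have eA : perm_eq (eigenvalues (nccc_A G))
    (mspec [:: (0, ((p + 1) * (n - 1))%N); (- n%:R, p); ((n * p)%:R, 1%N)]).
  by rewrite AE'; apply: (eig_spec hfib hN hn hp); ring.
have eL : perm_eq (eigenvalues (nccc_L G))
    (mspec [:: ((n * p)%:R, ((p + 1) * (n - 1))%N); (((p + 1) * n)%:R, p);
               (0, 1%N)]).
  by rewrite LE_; apply: (eig_spec hfib hN hn hp); rewrite ?natrM ?natrD; ring.
have eQ : perm_eq (eigenvalues (nccc_Q G))
    (mspec [:: ((n * p)%:R, ((p + 1) * (n - 1))%N); ((n * (p - 1))%:R, p);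
               ((2 * n * p)%:R, 1%N)]).
  rewrite QE_; apply: (eig_spec hfib hN hn hp); rewrite ?natrM ?(natrB _ hp); ring.
have hNp : ((nccc_n G)%:R : algC) != 0.
  rewrite pnatr_eq0 hN; move: hn; clearbody n; lia.
have Delta : nccc_Delta G = (n * p)%:R.
  rewrite /nccc_Delta AE; under eq_bigr do rewrite (Am_row hfib hN hn hp).
  rewrite -natr_sum sum_nat_const card_ord natrM mulrC mulKf //.
have fin : (n%:R *+ p + (n * p)%:R : algC) = (2 * n * p)%:R.
  rewrite -(mulr_natr n%:R p) -natrM -natrD; congr (_%:R); lia.
split => //; first exact: perm_trans eL (mspec_rot _ _ _).
split.
- rewrite /nccc_E /energy (perm_big _ eA) sum_mspec normr0 mul0rn add0r.
  by rewrite normrN !normr_nat mulr1n fin.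
- rewrite /nccc_LE /shifted_energy Delta (perm_big _ eL) sum_mspec.
  have e1 : ((p + 1) * n)%:R - (n * p)%:R = n%:R :> algC.
    by rewrite !(natrM, natrD); ring.
  by rewrite subrr normr0 mul0rn add0r e1 sub0r normrN !normr_nat mulr1n fin.
- rewrite /nccc_SE /shifted_energy Delta (perm_big _ eQ) sum_mspec.
  have e2 : (n * (p - 1))%:R - (n * p)%:R = - n%:R :> algC.
    by rewrite !natrM (natrB _ hp); ring.
  have e3 : (2 * n * p)%:R - (n * p)%:R = (n * p)%:R :> algC.
    by rewrite !natrM; ring.
  by rewrite subrr normr0 mul0rn add0r e2 e3 normrN !normr_nat mulr1n fin.
Qed.
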